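(* $k$-monotonicity is extendable: for any finite poset $\mathcal{P}$, any subset $X\subseteq\mathcal{P}$, and any function $f\colon X\to\{0,1\}$ that is $k$-monotone on $X$, there exists $g\colon\mathcal{P}\to\{0,1\}$ with $g(x)=f(x)$ for all $x\in X$ such that $g$ is $k$-monotone on $\mathcal{P}$.
   Context: For a subset $S$ of a poset (with the induced order), a function $f\colon S\to\{0,1\}$ is $k$-monotone on $S$ if there is no chain $x_1\prec\cdots\prec x_{k+1}$ of elements of $S$ with $f(x_1)=1$ and $f(x_i)\neq f(x_{i+1})$ for all $i\in[k]$. *)

(* Defs.v *)
From mathcomp Require Import all_boot all_order.
Set Implicit Arguments. Unset Strict Implicit. Unset Printing Implicit Defensive.
Import Order.TTheory.
Local Open Scope order_scope.

(* f : T -> bool is k-monotone on S (with the induced order) iff there is no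
   chain x_1 < x_2 < ... < x_{k+1} of elements of S with f x_1 = true and
   f x_i <> f x_{i+1} for all i in [k].  The chain is x :: s with size s = k. *)
Definition kmonotone_on {d : Order.disp_t} {T : finPOrderType d}
  (k : nat) (S : {set T}) (f : T -> bool) : Prop :=
  ~ exists (x : T) (s : seq T),
      [/\ x \in S, all (fun y => y \in S) s, size s = k, f x &
          path (fun a b => (a < b) && (f a != f b)) x s].

(* Main.v *)
Require Import Defs.
From mathcomp Require Import all_boot all_order.
From Stdlib Require Import ClassicalEpsilon.
Import Order.TTheory.

Definition pb (P : Prop) : bool :=
  if excluded_middle_informative P then true else false.

Lemma pbP (P : Prop) : reflect P (pb P).
Proof. by rewrite /pb; case: excluded_middle_informative => h; constructor. Qed.

Lemma path_parity (d : Order.disp_t) (T : finPOrderType d) (f : T -> bool)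
  (x : T) (s : seq T) :
  path (fun a b => ((a < b)%O) && (f a != f b)) x s ->
  f (last x s) = f x (+) odd (size s).
Proof.
elim: s x => [|y s IH] x /=; first by rewrite addbF.
case/andP=> /andP[_ hxy] /IH ->.
by move: hxy; case: (f x); case: (f y); case: (odd (size s)).
Qed.

Arguments path_parity {d T f x s}.

Theorem lemmaB7 (d : Order.disp_t) (T : finPOrderType d) (k : nat)
  (X : {set T}) (f : T -> bool) :
  kmonotone_on k X f ->
  exists g : T -> bool, (forall x, x \in X -> g x = f x) /\
    kmonotone_on k [set: T] g.
Proof.
move=> hk.
pose rel := fun a b => ((a < b)%O) && (f a != f b).
pose P := fun (z : T) (m : nat) => m = 0 \/ exists x s,
  [/\ x \in X, all (fun y => y \in X) s, size s = m.-1, f x &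
    (path rel x s /\ ((last x s <= z)%O /\ 0 < m))].
pose R := fun z => \max_(m < k.+1 | pb (P z m)) (m : nat).
have Rspec : forall z, P z (R z).
  move=> z; have h0 : 0 < #|[pred m : 'I_k.+1 | pb (P z m)]|.
    apply/card_gt0P; exists ord0; rewrite inE; apply/pbP; by left.
  case: (eq_bigmax_cond (fun m : 'I_k.+1 => (m : nat)) h0) => i.
  rewrite inE => /pbP hi; rewrite /R => ->; exact hi.
have Rle : forall z, R z <= k.
  move=> z; apply/bigmax_leqP => i _; by rewrite -ltnS.
have Rge : forall z m, m <= k -> P z m -> m <= R z.
  move=> z m hm hP; rewrite /R.
  have := @leq_bigmax_cond _ (fun i : 'I_k.+1 => pb (P z i))
     (fun i : 'I_k.+1 => (i : nat)) (Ordinal (hm : m < k.+1)).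
  by apply; apply/pbP.
have Rmono : forall z z', (z <= z')%O -> R z <= R z'.
  move=> z z' hz; apply/bigmax_leqP => i /pbP hi; apply: Rge.
    by rewrite -ltnS.
  case: hi => [->|[x [s [h1 h2 h3 h4 [h5 [h6 h7]]]]]]; first by left.
  right; exists x, s; split => //; exact: (conj h5 (conj (le_trans h6 hz) h7)).
exists (fun z => odd (R z)); split.
- move=> x xX.
  case: (Rspec x) => [R0|[x0 [s [h1 h2 h3 h4 [h5 [h6 h7]]]]]].
    rewrite R0 /=; case fx: (f x) => //.
    have kpos : 0 < k.
      case: k hk {Rmono Rle Rge Rspec R R0} => // hk; exfalso; apply: hk.
      by exists x, [::]; split.
    have : 1 <= R x.
      apply: Rge => //; right; exists x, [::]; split => //.
    by rewrite R0.
  have par : f (last x0 s) = odd (R x).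
    rewrite (path_parity h5) h4 h3; case: (R x) h7 => //= n _.
  case: (boolP (f x == f (last x0 s))) => [/eqP -> //|hne].
  exfalso.
  have lt : (last x0 s < x)%O.
    rewrite lt_neqAle h6 andbT; apply/eqP => el; move: hne; by rewrite el eqxx.
  have pth : path rel x0 (rcons s x).
    by rewrite rcons_path h5 /rel lt eq_sym hne.
  case: (leqP (R x).+1 k) => hRk.
    have : (R x).+1 <= R x.
      apply: Rge => //; right; exists x0, (rcons s x); split => //.
      - by rewrite all_rcons xX h2.
      - by rewrite size_rcons h3 prednK.
      - by rewrite last_rcons.
    by rewrite ltnn.
  have eRk : R x = k by apply/eqP; rewrite eqn_leq Rle /=; rewrite ltnS in hRk.
  apply: hk; exists x0, (rcons s x); split => //.
  - by rewrite all_rcons xX h2.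
  - by rewrite size_rcons h3 prednK // eRk.
- case=> z [s [_ _ hs gz hp]].
  have key : forall s z, path (fun a b => ((a < b)%O) && (odd (R a) != odd (R b))) z s ->
      R z + size s <= R (last z s).
    elim=> [|y s' IH] z' /=; first by rewrite addn0.
    case/andP=> /andP[hzy hodd] /IH h.
    have : R z' < R y.
      rewrite ltn_neqAle Rmono ?ltW // andbT; apply/eqP => e; move: hodd; by rewrite e eqxx.
    move=> lt; apply: leq_trans h; by rewrite addnS ltn_add2r.
  have := key s z hp; rewrite hs => h.
  have : 0 < R z by case: (R z) gz.
  move=> pos; have h1 : k.+1 <= R (last z s).
    by apply: leq_trans h; rewrite -add1n leq_add2r.
  by have := leq_trans h1 (Rle (last z s)); rewrite ltnn.
Qed.
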